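(* Let $p\geq 5$ be prime. Then all odd numbers $$2k(n,p)^{+}+1=(2n+1)p+4N(p/6),\quad n=0,1,2,\ldots,$$ $$2k(n,p)^{-}+1=(2n+1)p-4N(p/6),\quad n=1,2,\ldots,$$ are non-ranks. More precisely: (a) If $p\equiv 1\pmod 6$, then $3(2k(n,p)^{+}+1)\mp 2$ is the pair $([3(2n+1)+2]p-4,\,[3(2n+1)+2]p)$, and $3(2k(n,p)^{-}+1)\mp 2$ is the pair $([3(2n+1)-2]p,\,[3(2n+1)-2]p+4)$. (b) If $p\equiv -1\pmod 6$, then $3(2k(n,p)^{+}+1)\mp 2$ is the pair $([3(2n+1)+2]p,\,[3(2n+1)+2]p+4)$, and $3(2k(n,p)^{-}+1)\mp 2$ is the pair $([3(2n+1)-2]p-4,\,[3(2n+1)-2]p)$. Each of these pairs contains a composite number.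
   Context: $N(x)$ denotes the integer nearest to the real number $x$ (for prime $p\geq5$, $N(p/6)=(p-1)/6$ if $p\equiv1\pmod6$ and $(p+1)/6$ if $p\equiv-1\pmod6$). An odd integer $t\geq 3$ is a twin-4 rank if $3t-2$ and $3t+2$ are both prime, and a non-rank otherwise. *)

(* Defs.v *)
From mathcomp Require Import all_boot.
Set Implicit Arguments. Unset Strict Implicit. Unset Printing Implicit Defensive.

(* nearest integer to the rational m/d (d > 0), rounding halves up:
   floor(m/d + 1/2) = (2m + d) %/ (2d). For m = p prime >= 5, d = 6,
   m/d is never a half-integer, so this is the unambiguous N(p/6). *)
Definition nearest_div (m d : nat) : nat := (2 * m + d) %/ (2 * d).

Definition twin4_rank (t : nat) : bool :=
  [&& odd t, 3 <= t, prime (3 * t - 2) & prime (3 * t + 2)].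

Definition twin4_nonrank (t : nat) : bool :=
  [&& odd t, 3 <= t & ~~ twin4_rank t].

Definition composite (m : nat) : bool := (1 < m) && ~~ prime m.

(* Main.v *)
Require Import Defs.
From mathcomp Require Import all_boot.
From mathcomp Require Import zify.

Lemma comp_mul a b : 1 < a -> 1 < b -> composite (a * b).
Proof.
move=> ha hb; rewrite /composite; apply/andP; split; first nia.
apply/negP => /primeP [_ H].
have /orP [/eqP e|/eqP e] := H a (dvdn_mulr b (dvdnn a)); nia.
Qed.

Lemma fin t A B : odd t -> 3 <= t -> 3*t-2 = A -> 3*t+2 = B ->
  composite A || composite B ->
  twin4_nonrank t && (composite (3*t-2) || composite (3*t+2)).
Proof.
move=> ho h3 eA eB hc; rewrite eA eB hc andbT /twin4_nonrank /twin4_rank ho h3 /=.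
rewrite eA eB; case/orP: hc => /andP [_ /negbTE ->]; by rewrite ?andbF.
Qed.

Lemma odd21 X : odd (2 * X).+1.
Proof. by rewrite /= oddM. Qed.

Lemma pmod p : prime p -> 5 <= p -> p %% 6 = 1 \/ p %% 6 = 5.
Proof.
move=> /primeP [_ H] h5.
have H2 : ~~ (2 %| p).
  apply/negP => /H /orP [/eqP e|/eqP e]; lia.
have H3 : ~~ (3 %| p).
  apply/negP => /H /orP [/eqP e|/eqP e]; lia.
lia.
Qed.

Theorem lemma2p5 (p : nat) (pp : prime p) (p5 : 5 <= p) :
  (forall n : nat,
     let t := (2 * n + 1) * p + 4 * nearest_div p 6 in
     [/\ twin4_nonrank t,
         p %% 6 = 1 ->
           3 * t - 2 = (3 * (2 * n + 1) + 2) * p - 4 /\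
           3 * t + 2 = (3 * (2 * n + 1) + 2) * p,
         p %% 6 = 5 ->
           3 * t - 2 = (3 * (2 * n + 1) + 2) * p /\
           3 * t + 2 = (3 * (2 * n + 1) + 2) * p + 4
       & composite (3 * t - 2) || composite (3 * t + 2)]) /\
  (forall n : nat, 1 <= n ->
     let t := (2 * n + 1) * p - 4 * nearest_div p 6 in
     [/\ twin4_nonrank t,
         p %% 6 = 1 ->
           3 * t - 2 = (3 * (2 * n + 1) - 2) * p /\
           3 * t + 2 = (3 * (2 * n + 1) - 2) * p + 4,
         p %% 6 = 5 ->
           3 * t - 2 = (3 * (2 * n + 1) - 2) * p - 4 /\
           3 * t + 2 = (3 * (2 * n + 1) - 2) * p
       & composite (3 * t - 2) || composite (3 * t + 2)]).
Proof.
have hdm := divn_eq p 6.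
set k := p %/ 6 in hdm.
have [r1|r5] := pmod p pp p5.
- have hN : nearest_div p 6 = k by rewrite /nearest_div; lia.
  rewrite hN r1 in hdm *.
  split=> [n t|n hn t].
  + have e1 : 3*t-2 = (3 * (2 * n + 1) + 2) * p - 4 by rewrite /t; nia.
    have e2 : 3*t+2 = (3 * (2 * n + 1) + 2) * p by rewrite /t; nia.
    have /andP [h1 h2] : twin4_nonrank t && (composite (3*t-2) || composite (3*t+2)).
      refine (@fin t _ _ _ _ e1 e2 _).
      * have -> : t = (2 * (n * p + 5 * k)).+1 by rewrite /t; nia.
        exact: odd21.
      * rewrite /t; nia.
      * by rewrite comp_mul ?orbT //; lia.
    by split.
  + have e1 : 3*t-2 = (3 * (2 * n + 1) - 2) * p by rewrite /t; nia.
    have e2 : 3*t+2 = (3 * (2 * n + 1) - 2) * p + 4 by rewrite /t; nia.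
    have /andP [h1 h2] : twin4_nonrank t && (composite (3*t-2) || composite (3*t+2)).
      refine (@fin t _ _ _ _ e1 e2 _).
      * have -> : t = (2 * (n * p + k)).+1 by rewrite /t; nia.
        exact: odd21.
      * rewrite /t; nia.
      * by rewrite comp_mul //; lia.
    by split.
- have hN : nearest_div p 6 = k.+1 by rewrite /nearest_div; lia.
  rewrite hN r5 in hdm *.
  split=> [n t|n hn t].
  + have e1 : 3*t-2 = (3 * (2 * n + 1) + 2) * p by rewrite /t; nia.
    have e2 : 3*t+2 = (3 * (2 * n + 1) + 2) * p + 4 by rewrite /t; nia.
    have /andP [h1 h2] : twin4_nonrank t && (composite (3*t-2) || composite (3*t+2)).
      refine (@fin t _ _ _ _ e1 e2 _).
      * have -> : t = (2 * (n * p + 5 * k + 4)).+1 by rewrite /t; nia.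
        exact: odd21.
      * rewrite /t; nia.
      * by rewrite comp_mul //; lia.
    by split.
  + have e1 : 3*t-2 = (3 * (2 * n + 1) - 2) * p - 4 by rewrite /t; nia.
    have e2 : 3*t+2 = (3 * (2 * n + 1) - 2) * p by rewrite /t; nia.
    have /andP [h1 h2] : twin4_nonrank t && (composite (3*t-2) || composite (3*t+2)).
      refine (@fin t _ _ _ _ e1 e2 _).
      * have -> : t = (2 * (n * p + k)).+1 by rewrite /t; nia.
        exact: odd21.
      * rewrite /t; nia.
      * by rewrite comp_mul ?orbT //; lia.
    by split.
Qed.
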